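(* Assume $n\geq 10^6$, let $t$ be a node of maximum popularity (so $\mu_t\ge\mu_k$ for all nodes $k$), and assume $\xi_t\geq 8200\ln n$. Let $\ell\in\{0,1,2\}$, and let $h$ be an integer and $k$ a node such that $h\in Z_t$ and $h-2\in Z_k$. Then $$\Pr[d_k(\mathbf{x})=h-\ell]\;\leq\;264\,e\sqrt{\frac{\ln n}{\xi_t}}\cdot\Pr[d_k(\mathbf{x})>h].$$
   Context: Setting: a priori popularity model on $n+1$ agents, where each directed edge $(i,j)$, $i\ne j$, is present independently with probability $p_j$, so the in-degree $d_k(\mathbf{x})\sim\mathrm{Bin}(n,p_k)$. Let $\mu_k=p_kn$ and $\xi_k=\min\{\mu_k,n-\mu_k\}$. The comfort zone of node $k$ is $Z_k=\{L_k,\dots,U_k\}$, where $L_k$ is the highest integer $c$ with $\Pr[d_k(\mathbf{x})<c]\leq n^{-5.33}$ (or $0$ if none exists) and $U_k$ is the lowest integer $c$ with $\Pr[d_k(\mathbf{x})>c]\leq n^{-5.33}$ (or $n$ if none exists). *)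

(* Defs.v *)
From HB Require Import structures.
From mathcomp Require Import all_boot all_order all_algebra.
From mathcomp Require Import all_classical all_reals all_analysis.
Set Implicit Arguments. Unset Strict Implicit. Unset Printing Implicit Defensive.
Import Order.TTheory GRing.Theory Num.Theory.
Local Open Scope ring_scope.

Section Popularity.
Variable R : realType.

Definition binom_pmf (n : nat) (p : R) (j : nat) : R :=
  'C(n, j)%:R * p ^+ j * (1 - p) ^+ (n - j).

Definition PrBin (n : nat) (p : R) (P : int -> bool) : R :=
  \sum_(j < n.+1 | P (j%:Z)) binom_pmf n p j.

(* In the a priori popularity model on n+1 agents, node k has in-degree
   d_k ~ Bin(n, p k). *)
Definition mu (n : nat) (p : 'I_n.+1 -> R) (k : 'I_n.+1) : R := p k * n%:R.
Definition xi (n : nat) (p : 'I_n.+1 -> R) (k : 'I_n.+1) : R :=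
  Num.min (mu p k) (n%:R - mu p k).

Definition thr (n : nat) : R := powR (n%:R) (- (533%:R / 100%:R)).

Definition L_ok (n : nat) (p : R) (c : int) : Prop :=
  PrBin n p (fun j => j < c) <= thr n.
Definition U_ok (n : nat) (p : R) (c : int) : Prop :=
  PrBin n p (fun j => j > c) <= thr n.

Definition is_L (n : nat) (p : R) (L : int) : Prop :=
  (L_ok n p L /\ forall c, L < c -> ~ L_ok n p c)
  \/ ((~ exists c, L_ok n p c) /\ L = 0).
Definition is_U (n : nat) (p : R) (U : int) : Prop :=
  (U_ok n p U /\ forall c, c < U -> ~ U_ok n p c)
  \/ ((~ exists c, U_ok n p c) /\ U = n%:Z).

Definition in_zone (n : nat) (p : 'I_n.+1 -> R) (k : 'I_n.+1) (h : int) : Prop :=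
  exists L U, is_L n (p k) L /\ is_U n (p k) U /\ L <= h <= U.

End Popularity.

(* Main.v *)
Require Import Defs.
From HB Require Import structures.
From mathcomp Require Import all_boot all_order all_algebra.
From mathcomp Require Import all_classical all_reals all_analysis.
From mathcomp Require Import ring lra zify.
Import Order.TTheory GRing.Theory Num.Theory.
Local Open Scope ring_scope.

Module Helpers.
Set Implicit Arguments. Unset Strict Implicit.

Lemma bpmf_ge0 (R : realType) n (q : R) j : 0 <= q <= 1 -> 0 <= binom_pmf n q j.
Proof.
move=> /andP[q0 q1]; rewrite /binom_pmf.
by rewrite !mulr_ge0 // exprn_ge0 // subr_ge0.
Qed.

Lemma PrBin_ge0 (R : realType) n (q : R) P : 0 <= q <= 1 -> 0 <= PrBin n q P.
Proof. by move=> hq; rewrite /PrBin sumr_ge0 // => j _; apply: bpmf_ge0. Qed.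

Lemma bpmf_ratio (R : realType) n (q : R) j : (j < n)%N ->
  binom_pmf n q j.+1 * (j.+1%:R * (1 - q)) = binom_pmf n q j * ((n - j)%:R * q).
Proof.
move=> jn; rewrite /binom_pmf.
have e1 : ('C(n, j.+1)%:R * j.+1%:R = 'C(n, j)%:R * (n - j)%:R :> R).
  by rewrite -!natrM mulnC mul_bin_left mulnC.
have e2 : (n - j = (n - j.+1).+1)%N by rewrite subnSK.
rewrite e2 !exprS.
rewrite -[_ * ((n - j.+1).+1%:R * q)]mulrA.
transitivity ('C(n, j.+1)%:R * j.+1%:R * (q * q ^+ j) * (1 - q) ^+ (n - j.+1) * (1 - q)); first by ring.
rewrite e1 -e2; ring.
Qed.

Lemma bpmf_mgf (R : realType) n (q lam : R) :
  \sum_(j < n.+1) binom_pmf n q j * expR (lam * j%:R) = (1 - q + q * expR lam) ^+ n.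
Proof.
rewrite exprDn; apply: eq_bigr => i _.
rewrite /binom_pmf expRM_natr exprMn -mulr_natl; ring.
Qed.


Lemma tail_gen (R : realType) n (q : R) (P : int -> bool) lam c : 0 <= q <= 1 ->
  (forall j : nat, (j <= n)%N -> P j%:Z -> 0 <= lam * (j%:R - c)) ->
  PrBin n q P <= expR (- (lam * c)) * (1 - q + q * expR lam) ^+ n.
Proof.
move=> hq hP; rewrite -bpmf_mgf mulr_sumr /PrBin big_mkcond /=.
apply: ler_sum => j _; case: ifP => Pj.
- have := hP j (ltn_ord j) Pj => h0.
  rewrite mulrCA -expRD.
  have -> : - (lam * c) + lam * j%:R = lam * (j%:R - c) by ring.
  apply: ler_peMr; first exact: (@bpmf_ge0 R n q j hq).
  by apply: le_trans (expR_ge1Dx _); lra.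
- by rewrite mulr_ge0 ?expR_ge0 // mulr_ge0 ?expR_ge0 // bpmf_ge0.
Qed.

Lemma expR_le2 (R : realType) (x : R) : x <= 1/11 -> expR x <= 1 + x + 11/10 * x ^+ 2.
Proof.
move=> hx.
have hz : 1 - x <= expR (- x) by have := expR_ge1Dx (- x); lra.
have hyz : expR x * expR (- x) = 1 by rewrite -expRD subrr expR0.
have hy : 0 < expR x := expR_gt0 x.
have hB : 1 <= (1 - x) * (1 + x + 11/10 * x ^+ 2).
  have h2 : 0 <= x ^+ 2 * (1/11 - x) by rewrite mulr_ge0 ?sqr_ge0 //; lra.
  nra.
have hB0 : 0 <= 1 + x + 11/10 * x ^+ 2 by nra.
nra.
Qed.

Lemma tailA (R : realType) n (q : R) (P : int -> bool) lam c : 0 <= q <= 1 -> lam <= 1/11 ->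
  (forall j : nat, (j <= n)%N -> P j%:Z -> 0 <= lam * (j%:R - c)) ->
  PrBin n q P <= expR (lam * (n%:R * q - c) + 11/10 * (n%:R * q) * lam ^+ 2).
Proof.
move=> hq hl hP; have T := tail_gen hq hP; apply: (le_trans T).
have h1 : 1 - q + q * expR lam <= expR (q * (lam + 11/10 * lam ^+ 2)).
  apply: le_trans (expR_ge1Dx _).
  have := expR_le2 hl; move: hq => /andP[q0 q1]; nra.
have h0 : 0 <= 1 - q + q * expR lam.
  move: hq => /andP[q0 q1]; have := expR_gt0 lam; nra.
have := lerXn2r n h0 (expR_ge0 _) h1.
rewrite -expRM_natr => h2.
apply: le_trans (ler_wpM2l (expR_ge0 _) h2) _.
rewrite -expRD ler_expR; rewrite le_eqVlt; apply/orP; left; apply/eqP; ring.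
Qed.

Lemma tailB (R : realType) n (q : R) (P : int -> bool) lam c : 0 <= q <= 1 -> - lam <= 1/11 ->
  (forall j : nat, (j <= n)%N -> P j%:Z -> 0 <= lam * (j%:R - c)) ->
  PrBin n q P <= expR (lam * (n%:R * q - c) + 11/10 * (n%:R - n%:R * q) * lam ^+ 2).
Proof.
move=> hq hl hP; apply: le_trans (tail_gen hq hP) _.
have h1 : 1 - q + q * expR lam <= expR (lam + (1 - q) * (- lam + 11/10 * lam ^+ 2)).
  rewrite expRD.
  have e1 := expR_ge1Dx ((1 - q) * (- lam + 11 / 10 * lam ^+ 2)).
  have e2 := expR_le2 hl.
  have e3 : expR lam * expR (- lam) = 1 by rewrite -expRD subrr expR0.
  have e4 := expR_gt0 lam.
  move: hq => /andP[q0 q1].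
  have e5 : (1 - q) * expR (- lam) <= (1 - q) * (1 + - lam + 11 / 10 * (- lam) ^+ 2).
    by apply: ler_wpM2l; lra.
  rewrite sqrrN in e5.
  nra.
have h0 : 0 <= 1 - q + q * expR lam.
  move: hq => /andP[q0 q1]; have := expR_gt0 lam; nra.
have := lerXn2r n h0 (expR_ge0 _) h1.
rewrite -expRM_natr => h2.
apply: le_trans (ler_wpM2l (expR_ge0 _) h2) _.
rewrite -expRD ler_expR; rewrite le_eqVlt; apply/orP; left; apply/eqP; ring.
Qed.


Lemma tailV (R : realType) n (q : R) (P : int -> bool) lam c v : 0 <= q <= 1 ->
  lam <= 1/11 -> - lam <= 1/11 -> (v = n%:R * q \/ v = n%:R - n%:R * q) ->
  (forall j : nat, (j <= n)%N -> P j%:Z -> 0 <= lam * (j%:R - c)) ->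
  PrBin n q P <= expR (lam * (n%:R * q - c) + 11/10 * v * lam ^+ 2).
Proof.
move=> hq h1 h2 [->|->] hP; [exact: tailA | exact: tailB].
Qed.

Lemma PrBin_none (R : realType) n (q : R) (P : int -> bool) :
  (forall j : nat, (j <= n)%N -> ~~ P j%:Z) -> PrBin n q P = 0.
Proof.
move=> hP; rewrite /PrBin big1 // => j Pj.
by have := hP j (ltn_ord j); rewrite Pj.
Qed.

Lemma zoneL (R : realType) n (q : R) L (h : int) : is_L n q L -> L <= h ->
  thr R n < PrBin n q (fun j => j < h + 1).
Proof.
move=> [[_ Hm]|[Hn _]] Lh.
- have H : ~ L_ok n q (h + 1) by apply: Hm; lia.
  move: H; rewrite /L_ok => H.
  by rewrite ltNge; apply/negP.
- exfalso; apply: Hn; exists 0; rewrite /L_ok PrBin_none ?powR_ge0 //.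
Qed.

Lemma zoneU (R : realType) n (q : R) U (h : int) : is_U n q U -> h <= U ->
  thr R n < PrBin n q (fun j => j > h - 1).
Proof.
move=> [[_ Hm]|[Hn _]] Lh.
- have H : ~ U_ok n q (h - 1) by apply: Hm; lia.
  move: H; rewrite /U_ok => H.
  by rewrite ltNge; apply/negP.
- exfalso; apply: Hn; exists n%:Z; rewrite /U_ok PrBin_none ?powR_ge0 //.
  move=> j jn; rewrite -leNgt; lia.
Qed.

Lemma thrE (R : realType) n : (0 < n)%N -> thr R n = expR (- (533%:R / 100%:R) * ln (n%:R)).
Proof.
move=> n0; rewrite /thr /powR.
have -> : (n%:R == 0 :> R) = false by apply/negbTE; rewrite pnatr_eq0 -lt0n.
by [].
Qed.

Lemma e_ge (R : realType) : (5/2 : R) <= expR 1.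
Proof.
have -> : (1 : R) = 6%:R * (1/6) by rewrite mul1r mulfV // pnatr_eq0.
rewrite expRM_natl.
have h := expR_ge1Dx (1/6 : R).
have h0 : (0 : R) <= 1 + 1/6 by lra.
apply: le_trans (lerXn2r 6 h0 (expR_ge0 _) h).
rewrite !exprS expr0; lra.
Qed.

Lemma e_le (R : realType) : expR 1 <= (4 : R).
Proof.
have -> : (1 : R) = 2%:R * (1/2) by rewrite mul1r mulfV // pnatr_eq0.
rewrite expRM_natl.
have h := expR_ge1Dx (- (1/2) : R).
have e3 : expR (1/2 : R) * expR (- (1/2)) = 1 by rewrite -expRD subrr expR0.
have e4 := expR_gt0 (1/2 : R).
have : expR (1/2 : R) <= (2 : R) by nra.
move=> h2; have h0 : (0:R) <= 2 by lra.
have := lerXn2r 2 (ltW e4) h0 h2.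
rewrite !expr2; lra.
Qed.

Lemma ln_ge1 (R : realType) (x : R) : 4 <= x -> 1 <= ln x.
Proof.
move=> hx.
have hp : 0 < x by lra.
rewrite -[leLHS](expRK 1) ler_ln ?posrE ?expR_gt0 //.
by apply: le_trans (e_le R) hx.
Qed.


Lemma step1 (R : realType) n (q : R) j delta beta : 0 < q < 1 -> 0 <= delta ->
  beta <= delta * (n%:R * q * (1 - q)) -> (j < n)%N -> j.+1%:R <= n%:R * q + beta ->
  (1 - delta) * binom_pmf n q j <= binom_pmf n q j.+1.
Proof.
move=> /andP[q0 q1] d0 hb jn hJ.
have hr := @bpmf_ratio R n q j jn.
have f0 : 0 <= binom_pmf n q j by apply: bpmf_ge0; lra.
set J : R := j.+1%:R in hr hJ.
have J0 : 0 < J by rewrite /J ltr0n.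
have hnj : (n - j)%:R = n%:R - J + 1 :> R.
  by rewrite natrB ?(ltnW jn) // /J -addn1 natrD; ring.
have key : (1 - delta) * (J * (1 - q)) <= (n - j)%:R * q.
  rewrite hnj.
  have [hle|hgt] := leP J (n%:R * q).
  - have : 0 <= delta * J * (1 - q) by rewrite !mulr_ge0 //; lra.
    nra.
  - have : delta * (n%:R * q * (1 - q)) <= delta * (J * (1 - q)).
      apply: ler_wpM2l => //; apply: ler_wpM2r; lra.
    nra.
have pos : 0 < J * (1 - q) by rewrite mulr_gt0 //; lra.
rewrite -(ler_pM2r pos) hr -mulrA.
rewrite mulrCA; exact: ler_wpM2l.
Qed.

Lemma chain (R : realType) n (q : R) j0 N delta beta : 0 < q < 1 -> 0 <= delta -> delta <= 1 ->
  beta <= delta * (n%:R * q * (1 - q)) -> (j0 + N <= n)%N ->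
  (j0 + N)%:R <= n%:R * q + beta ->
  forall i, (i <= N)%N -> (1 - i%:R * delta) * binom_pmf n q j0 <= binom_pmf n q (j0 + i).
Proof.
move=> hq d0 d1 hb hN hJ; elim => [|i IH] hi.
  by rewrite mul0r subr0 mul1r addn0.
have IH' := IH (ltnW hi).
have f0 : 0 <= binom_pmf n q j0 by apply: bpmf_ge0; move: hq => /andP[]; lra.
have hs : (1 - delta) * binom_pmf n q (j0 + i) <= binom_pmf n q (j0 + i).+1.
  apply: (step1 hq d0 hb); first by lia.
  apply: le_trans hJ; rewrite ler_nat; lia.
rewrite addnS; apply: le_trans hs.
have hd1 : 1 - i.+1%:R * delta <= (1 - delta) * (1 - i%:R * delta).
  rewrite -addn1 natrD.
  have : 0 <= i%:R * delta * delta by rewrite !mulr_ge0.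
  nra.
have hd : 0 <= 1 - delta by lra.
apply: le_trans (ler_wpM2l hd IH'); rewrite [X in _ <= X]mulrA. by have := ler_wpM2r f0 hd1.
Qed.

Lemma sum_lb (R : realType) n (q : R) H m g : 0 <= q <= 1 -> (H + m <= n)%N ->
  (forall i, (1 <= i <= m)%N -> g <= binom_pmf n q (H + i)) ->
  m%:R * g <= PrBin n q (fun j => j > H%:Z).
Proof.
move=> hq hm hg.
rewrite /PrBin -(big_mkord (fun j : nat => H%:Z < j%:Z) (fun j => binom_pmf n q j)).
rewrite (@big_cat_nat _ _ _ H.+1) //=; last by lia.
rewrite [X in _ <= _ + X](@big_cat_nat _ _ _ (H.+1 + m)) //=; last by lia.
have p1 : 0 <= \sum_(0 <= i < H.+1 | H%:Z < i%:Z) binom_pmf n q i.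
  by apply: sumr_ge0 => i _; apply: bpmf_ge0.
have p3 : 0 <= \sum_(H.+1 + m <= i < n.+1 | H%:Z < i%:Z) binom_pmf n q i.
  by apply: sumr_ge0 => i _; apply: bpmf_ge0.
suff : m%:R * g <= \sum_(H.+1 <= i < H.+1 + m | H%:Z < i%:Z) binom_pmf n q i by lra.
rewrite big_mkcond /=.
have -> : m%:R * g = \sum_(H.+1 <= i < H.+1 + m) g.
  by rewrite sumr_const_nat mulr_natl; congr (_ *+ _); lia.
apply: ler_sum_nat => i hi.
have -> : (H%:Z < i%:Z) = true by apply/idP; move: hi => /andP[a _]; rewrite ltz_nat.
have -> : i = (H + (i - H))%N by lia.
apply: hg; lia.
Qed.
Lemma xi_facts (R : realType) n (p : 'I_n.+1 -> R) t :
  xi p t <= mu p t /\ xi p t <= n%:R - mu p t /\ (xi p t = mu p t \/ xi p t = n%:R - mu p t).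
Proof.
rewrite /xi /Num.min /Order.min /=; case: ifP => h.
- move/ltW: (idP h) => h'; split; [|split]; [lra|lra|left] => //.
- move/negbT: h; rewrite -leNgt => h; split; [|split]; [lra|lra|right] => //.
Qed.

Lemma PrBin_eq (R : realType) n (q : R) x : (x <= n)%N ->
  PrBin n q (fun j => j == x%:Z) = binom_pmf n q x.
Proof.
move=> xn; rewrite /PrBin (big_pred1 (inord x : 'I_n.+1)).
  by rewrite inordK.
move=> j /=; rewrite eqz_nat; apply/eqP/eqP => e.
  by apply: val_inj; rewrite /= inordK.
by rewrite e inordK.
Qed.

Lemma num_trunc (R : realType) (r : R) : 0 < r ->
  exists m : nat, 1 <= 330 * r * m%:R /\ 330 * r * m%:R <= 1 + 330 * r.
Proof.
move=> r0; set x := 1 / (330 * r).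
have x0 : 0 <= x by rewrite /x divr_ge0 // mulr_ge0 //; lra.
have hx : 330 * r * x = 1 by rewrite /x; field; lra.
exists (Num.Def.trunc x).+1.
have h1 := truncnS_gt x.
have h2 : (Num.Def.trunc x)%:R <= x by rewrite truncn_le.
rewrite -addn1 natrD in h1 *.
have p : 0 < 330 * r by lra.
split.
- rewrite -[leLHS]hx; apply: ler_wpM2l; lra.
- have : 330 * r * ((Num.Def.trunc x)%:R + 1) <= 330 * r * (x + 1) by apply: ler_wpM2l; lra.
  lra.
Qed.

Lemma intc1 (j H : nat) : (Posz j < Posz H + 1) -> (j <= H)%N.
Proof. lia. Qed.
Lemma intc2 (j H : nat) : (Posz H - 2 - 1 < Posz j) -> (H <= j + 2)%N.
Proof. lia. Qed.


Lemma num1 (R : realType) (Mr H xi0 r Lam : R) : 0 <= Lam -> 0 < r -> xi0 * r ^+ 2 = Lam ->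
  H < Mr - 5 * xi0 * r ->
  -(11/5) * r * (Mr - H) + 11/10 * xi0 * (-(11/5) * r) ^+ 2 <= - (5 + 33/100) * Lam.
Proof.
move=> L0 r0 hX hlt.
have hA0 : (5 * xi0 * r) * r <= (Mr - H) * r by apply: ler_wpM2r; lra.
have hA : 5 * (xi0 * r ^+ 2) <= (Mr - H) * r by rewrite expr2; lra.
have -> : -(11/5) * r * (Mr - H) + 11/10 * xi0 * (-(11/5) * r) ^+ 2
   = -(11/5) * ((Mr - H) * r) + (11/10 * (121/25)) * (xi0 * r ^+ 2) by field.
rewrite hX in hA *; lra.
Qed.

Lemma num2 (R : realType) (mu c xi0 r Lam v : R) : 0 <= Lam -> 0 < r -> r <= 2/181 -> xi0 * r ^+ 2 = Lam ->
  82 * 100 <= xi0 -> c - mu > 11/2 * xi0 * r -> v <= xi0 + (c - mu) + 2 + 5 * xi0 * r ->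
  (11/5 * r) * (mu - c) + 11/10 * v * (11/5 * r) ^+ 2 <= - (5 + 33/100) * Lam.
Proof.
move=> L0 r0 hr hX hxi ha hv.
have r20 : 0 <= r ^+ 2 by rewrite sqr_ge0.
have hA0 : (11/2 * xi0 * r) * r <= (c - mu) * r by apply: ler_wpM2r; lra.
have hA : 11/2 * Lam <= (c - mu) * r by rewrite -hX expr2; lra.
have hvr : v * r ^+ 2 <= (xi0 + (c - mu) + 2 + 5 * xi0 * r) * r ^+ 2 by apply: ler_wpM2r.
have e1 : (xi0 + (c - mu) + 2 + 5 * xi0 * r) * r ^+ 2
   = Lam + ((c - mu) * r) * r + 2 * r ^+ 2 + 5 * Lam * r by rewrite -hX; ring.
have h1 : ((c - mu) * r) * r <= ((c - mu) * r) * (2/181) by apply: ler_wpM2l; lra.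
have h2 : Lam * r <= Lam * (2/181) by apply: ler_wpM2l; lra.
have h3 : 82 * 100 * r ^+ 2 <= Lam by rewrite -hX; apply: ler_wpM2r.
have -> : (11/5 * r) * (mu - c) + 11/10 * v * (11/5 * r) ^+ 2
   = -(11/5) * ((c - mu) * r) + (11/10 * (121/25)) * (v * r ^+ 2) by field.
lra.
Qed.


Lemma num_r (R : realType) (Lam xi0 : R) : 1 <= Lam -> 82 * 100 * Lam <= xi0 ->
  0 < Num.sqrt (Lam / xi0) /\ xi0 * (Num.sqrt (Lam / xi0)) ^+ 2 = Lam /\
  Num.sqrt (Lam / xi0) <= 2/181 /\ 82 * 100 <= xi0.
Proof.
move=> hL hx.
have x0 : 0 < xi0 by lra.
have hr2 : Num.sqrt (Lam / xi0) ^+ 2 = Lam / xi0 by rewrite sqr_sqrtr // divr_ge0 //; lra.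
have hr0 : 0 < Num.sqrt (Lam / xi0) by rewrite sqrtr_gt0 divr_gt0 //; lra.
set r := Num.sqrt (Lam / xi0) in hr2 hr0 *.
have hX : xi0 * r ^+ 2 = Lam by rewrite hr2; field; lra.
split => //; split => //; split; last by lra.
have h1 : 82 * 100 * (xi0 * r ^+ 2) <= xi0 * 1 by rewrite hX; lra.
have h2 : 82 * 100 * r ^+ 2 <= 1.
  have : xi0 * (82 * 100 * r ^+ 2) <= xi0 * 1 by rewrite mulrCA.
  by rewrite ler_pM2l.
rewrite leNgt; apply/negP => hc.
have : (2/181) * (2/181) < r * r by apply: ltr_pM; lra.
rewrite expr2 in h2; lra.
Qed.

Lemma num3 (R : realFieldType) (n mu Mr xi0 r q : R) : 0 < r -> r <= 2/181 -> 82 * 100 <= xi0 ->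
  xi0 <= Mr -> xi0 <= n - Mr -> mu <= Mr -> Mr - 21/2 * xi0 * r - 2 <= mu ->
  mu = n * q -> 0 <= q <= 1 ->
  0 < q /\ q < 1 /\ 11/25 * xi0 <= n * q * (1 - q).
Proof.
move=> r0 hr hx h1 h2 h3 h4 hm /andP[q0 q1].
have hxr : xi0 * r <= xi0 * (2/181) by apply: ler_wpM2l; lra.
have hmu : 12/25 * xi0 <= mu by lra.
have hnm : xi0 <= n - mu by lra.
have hn : 0 < n by lra.
have qp : 0 < q.
  rewrite lt_def q0 andbT; apply/eqP => e; move: hm; rewrite e mulr0; lra.
have ql : q < 1.
  rewrite lt_def q1 andbT; apply/eqP => e; move: hm; rewrite -e mulr1; lra.
split => //; split => //.
case: (lerP q (1/2)) => hq.
- have : mu * (1/2) <= mu * (1 - q) by apply: ler_wpM2l; lra.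
  rewrite -hm; lra.
- have : (n - mu) * (1/2) <= (n - mu) * q by apply: ler_wpM2l; lra.
  have -> : n * q * (1 - q) = (n - mu) * q by rewrite hm; ring.
  lra.
Qed.

Lemma num4a (R : realFieldType) (xi0 r m D : R) : 0 < r -> r <= 2/181 -> 1 <= xi0 * r ^+ 2 ->
  0 <= m -> 330 * r * m <= 1 + 330 * r -> 11/25 * xi0 <= D ->
  (m + 2) * (11/2 * xi0 * r + m + 2) <= D / 2.
Proof.
move=> r0 hr hX m0 hm hD.
set u := m + 2.
have hu : r * u <= 1/330 + 6/181 by rewrite /u; lra.
have u0 : 0 <= u by rewrite /u; lra.
have ru0 : 0 <= r * u by rewrite mulr_ge0 //; lra.
have x0 : 0 <= xi0.
  rewrite leNgt; apply/negP => hc.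
  have : xi0 * r ^+ 2 <= 0 by rewrite mulr_le0_ge0 ?sqr_ge0 //; lra.
  lra.
have e1 : u * (11/2 * xi0 * r + m + 2) = 11/2 * xi0 * (r * u) + u ^+ 2 by rewrite /u; ring.
have h1 : xi0 * (r * u) <= xi0 * (1/330 + 6/181) by apply: ler_wpM2l.
have h2 : u ^+ 2 <= u ^+ 2 * (xi0 * r ^+ 2) by apply: ler_peMr => //; rewrite sqr_ge0.
have e2 : u ^+ 2 * (xi0 * r ^+ 2) = xi0 * ((r * u) * (r * u)) by ring.
have h3 : (r * u) * (r * u) <= (1/330 + 6/181) * (1/330 + 6/181).
  by apply: ler_pM => //.
have h4 : xi0 * ((r * u) * (r * u)) <= xi0 * ((1/330 + 6/181) * (1/330 + 6/181)).
  by apply: ler_wpM2l.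
rewrite e1; lra.
Qed.

Lemma num4b (R : realFieldType) (n H mu Mr xi0 r m : R) : 0 < r -> r <= 2/181 -> 1 <= xi0 * r ^+ 2 ->
  0 <= m -> 330 * r * m <= 1 + 330 * r ->
  H <= mu + 11/2 * xi0 * r + 2 -> mu <= Mr -> Mr + xi0 <= n -> 82 * 100 <= xi0 ->
  H + m <= n.
Proof.
move=> r0 hr hX m0 hm hH hmu hn hx.
have hxr : xi0 * r <= xi0 * (2/181) by apply: ler_wpM2l; lra.
have h2 : m <= m * (xi0 * r ^+ 2) by apply: ler_peMr.
have e2 : m * (xi0 * r ^+ 2) = (xi0 * r) * (r * m) by ring.
have h3 : r * m <= 1/330 + r by lra.
have h4 : (xi0 * r) * (r * m) <= (xi0 * r) * (1/330 + 2/181).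
  apply: ler_wpM2l; [rewrite mulr_ge0 //; lra | lra].
lra.
Qed.

Lemma num5 (R : realFieldType) (c r m e f0 P : R) : c = 2 * 132 -> 0 < r -> 0 <= m ->
  1 <= 330 * r * m -> 5/2 <= e ->
  0 <= f0 -> m * (f0 / 2) <= P -> f0 <= c * e * r * P.
Proof.
move=> -> r0 m0 hm he f0p hP.
have hC : 0 <= 2 * 132 * e * r by rewrite !mulr_ge0 //; lra.
apply: le_trans (ler_wpM2l hC hP).
have : 1 <= 2 * 132 * e * r * (m / 2).
  have : 330 * r * m <= 132 * e * r * m.
    apply: ler_wpM2r => //; apply: ler_wpM2r; lra.
  have -> : 2 * 132 * e * r * (m / 2) = 132 * e * r * m by field.
  lra.
move=> h; have := ler_wpM2r f0p h; rewrite mul1r.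
by have -> : 2 * 132 * e * r * (m * (f0 / 2)) = 2 * 132 * e * r * (m / 2) * f0 by ring.
Qed.


End Helpers.
Import Helpers.

Theorem mainTheorem9 (R : realType) (n : nat) (p : 'I_n.+1 -> R)
  (hp : forall k, 0 <= p k <= 1)
  (hn : (10%:R ^+ 6 : R) <= n%:R)
  (t : 'I_n.+1) (ht : forall k, mu p k <= mu p t)
  (hxi : 8200%:R * ln (n%:R : R) <= xi p t)
  (l : nat) (hl : (l <= 2)%N) (h : int) (k : 'I_n.+1)
  (hzt : in_zone p t h) (hzk : in_zone p k (h - 2)) :
  PrBin n (p k) (fun j => j == h - l%:Z)
    <= 264%:R * expR 1 * Num.sqrt (ln (n%:R : R) / xi p t)
       * PrBin n (p k) (fun j => j > h).
Proof.
have hxi' : 82 * 100 * ln (n%:R : R) <= xi p t by rewrite -natrM; exact: hxi.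
clear hxi.
have hn4 : (4 : R) <= n%:R.
  have h5 : (1 : R) <= 10%:R ^+ 5 by rewrite exprn_ege1 // ler1n.
  rewrite exprS in hn; lra.
clear hn.
have hn0 : (0 < n)%N by rewrite -(ltr_nat R); lra.
have hRHS0 : 0 <= 264%:R * expR 1 * Num.sqrt (ln (n%:R : R) / xi p t)
       * PrBin n (p k) (fun j => j > h).
  by rewrite !mulr_ge0 ?expR_ge0 ?sqrtr_ge0 ?PrBin_ge0.
case: h hzt hzk hRHS0 => [H|H] hzt hzk hRHS0; last first.
  by rewrite PrBin_none // => j _; lia.
case: (leqP l H) => hlH; last first.
  by rewrite PrBin_none // => j _; lia.
clear hRHS0.
have hq := hp k; have hQ := hp t.
have hthr := thrE R hn0.
set Lam := ln (n%:R : R) in hxi' hthr *.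
have hL1 : 1 <= Lam := ln_ge1 hn4.
set xi0 := xi p t in hxi' *.
have [hr0 [hX [hr hx8]]] := num_r hL1 hxi'.
set r := Num.sqrt (Lam / xi0) in hr0 hX hr *.
have [hxM [hxnM hxE]] := xi_facts p t.
rewrite -/xi0 in hxM hxnM hxE.
set q := p k in hq *.
set Q := p t in hQ.
have hMr : mu p t = n%:R * Q by rewrite /mu mulrC.
have hmu : n%:R * q <= mu p t by have := ht k; rewrite /mu mulrC.
set Mr := mu p t in hMr hmu hxM hxnM hxE.
clear ht.
have h533 : (533%:R / 100%:R : R) = 5 + 33/100 by rewrite -[533%:R]/((5 * 100 + 33)%:R) natrD natrM; field.
have Z1 : thr R n < PrBin n Q (fun j => j < Posz H + 1).
  move: hzt => [L [U [hL [_ /andP[hLH _]]]]]; exact: zoneL hL hLH.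
have Z2 : thr R n < PrBin n q (fun j => j > Posz H - 2 - 1).
  move: hzk => [L [U [_ [hU /andP[_ hHU]]]]]; exact: zoneU hU hHU.
rewrite hthr h533 in Z1 Z2.
clear hzt hzk hthr h533.
have L0 : 0 <= Lam by lra.
have hlam : (11/5) * r <= 1/11 by lra.
have S1 : Mr - 5 * xi0 * r <= H%:R.
  rewrite leNgt; apply/negP => hlt.
  have hP : forall j : nat, (j <= n)%N -> (Posz j < Posz H + 1) ->
      0 <= (-(11/5) * r) * (j%:R - H%:R).
    move=> j _ /intc1 hj; move: hj.
    rewrite -(ler_nat R) => hj'; apply: mulr_le0; lra.
  have hv : xi0 = n%:R * Q \/ xi0 = n%:R - n%:R * Q by rewrite -hMr.
  have l1 : -(11/5) * r <= 1/11 by lra.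
  have l2 : - (-(11/5) * r) <= 1/11 by lra.
  have T := @tailV R n Q (fun j => j < Posz H + 1) _ _ _ hQ l1 l2 hv hP.
  rewrite -hMr in T.
  have hE := num1 L0 hr0 hX hlt.
  have T2 : PrBin n Q (fun j => j < Posz H + 1) <= expR (- (5 + 33/100) * Lam).
    by apply: (le_trans T); rewrite ler_expR.
  by move: (lt_le_trans Z1 T2); rewrite ltxx.
have S2 : H%:R - 2 - n%:R * q <= 11/2 * xi0 * r.
  rewrite leNgt; apply/negP => hlt.
  have hP : forall j : nat, (j <= n)%N -> (Posz H - 2 - 1 < Posz j) ->
      0 <= (11/5 * r) * (j%:R - (H%:R - 2)).
    move=> j _ /intc2 hj; move: hj.
    rewrite -(ler_nat R) natrD => hj'; apply: mulr_ge0; lra.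
  have hlt' : H%:R - 2 - n%:R * q > 11/2 * xi0 * r by lra.
  have [v [hv hvb]] : exists v, (v = n%:R * q \/ v = n%:R - n%:R * q) /\
      v <= xi0 + ((H%:R - 2) - n%:R * q) + 2 + 5 * xi0 * r.
    case: hxE => e.
    - exists (n%:R * q); split; [by left|].
      have : 0 <= xi0 * r by rewrite mulr_ge0 //; lra.
      lra.
    - exists (n%:R - n%:R * q); split; [by right|].
      lra.
  have l1 : 11/5 * r <= 1/11 by lra.
  have l2 : - (11/5 * r) <= 1/11 by lra.
  have T := @tailV R n q (fun j => j > Posz H - 2 - 1) _ _ _ hq l1 l2 hv hP.
  have hE := num2 L0 hr0 hr hX hx8 hlt' hvb.
  have T2 : PrBin n q (fun j => j > Posz H - 2 - 1) <= expR (- (5 + 33/100) * Lam).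
    by apply: (le_trans T); rewrite ler_expR.
  by move: (lt_le_trans Z2 T2); rewrite ltxx.
clear Z1 Z2.
have S3 : Mr - 21/2 * xi0 * r - 2 <= n%:R * q by lra.
have [hq0 [hq1 hD]] := num3 hr0 hr hx8 hxM hxnM hmu S3 (erefl _) hq.
have [m [hm1 hm2]] := num_trunc hr0.
have hX1 : 1 <= xi0 * r ^+ 2 by rewrite hX.
have m0 : 0 <= (m%:R : R) by rewrite ler0n.
set D := n%:R * q * (1 - q) in hD *.
have hD0 : 0 < D by lra.
set beta := 11/2 * xi0 * r + m%:R + 2.
set delta := beta / D.
have hb : beta <= delta * D by rewrite /delta divfK ?lt0r_neq0.
have hub := num4a hr0 hr hX1 m0 hm2 hD.
have hud : (m%:R + 2) * delta <= 1/2.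
  rewrite /delta mulrA ler_pdivrMr //.
  have : (m%:R + 2) * (11 / 2 * xi0 * r + m%:R + 2) = (m%:R + 2) * beta by rewrite /beta.
  lra.
have xr0 : 0 <= xi0 * r by rewrite mulr_ge0 //; lra.
have hd0 : 0 <= delta by rewrite /delta divr_ge0 //; [rewrite /beta; lra | lra].
have hd1 : delta <= 1.
  have : 0 <= m%:R * delta by rewrite mulr_ge0.
  lra.
have hHm : (H + m <= n)%N.
  rewrite -(ler_nat R) natrD.
  apply: (num4b hr0 hr hX1 m0 hm2 _ hmu _ hx8); lra.
have eHm : (H - l + (l + m) = H + m)%N by rewrite addnA subnK.
have hN : (H - l + (l + m) <= n)%N by rewrite eHm.
have hJ : ((H - l) + (l + m))%:R <= n%:R * q + beta.
  by rewrite eHm natrD /beta; lra.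
have hq01 : 0 < q < 1 by apply/andP.
have hC := chain hq01 hd0 hd1 hb hN hJ.
set f0 := binom_pmf n q (H - l) in hC *.
have f00 : 0 <= f0 by apply: bpmf_ge0.
have hS : m%:R * (f0 / 2) <= PrBin n q (fun j => j > Posz H).
  apply: sum_lb => //.
  move=> i /andP[i1 im].
  have hli : (l + i <= l + m)%N by rewrite leq_add2l.
  have := hC (l + i) hli.
  rewrite (_ : (H - l + (l + i))%N = (H + i)%N); last by rewrite addnA subnK.
  have hli2 : ((l + i)%:R : R) <= m%:R + 2.
    rewrite (_ : (m%:R + 2 : R) = (m + 2)%:R); last by rewrite natrD.
    rewrite ler_nat addnC leq_add //.
  have hli3 : (l + i)%:R * delta <= 1/2.
    apply: le_trans hud; exact: ler_wpM2r.
  have : 1/2 * f0 <= (1 - (l + i)%:R * delta) * f0 by apply: ler_wpM2r => //; lra.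
  move=> h1 h2; apply: le_trans h2; lra.
have hL : PrBin n q (fun j => j == Posz H - l%:Z) = f0.
  rewrite (_ : Posz H - l%:Z = (H - l)%:Z); last by rewrite subzn.
  apply: PrBin_eq.
  exact: leq_trans (leq_subr l H) (leq_trans (leq_addr m H) hHm).
rewrite hL.
have h264 : (264%:R : R) = 2 * 132 by rewrite -natrM.
exact: (num5 h264 hr0 m0 hm1 (e_ge R) f00 hS).
Qed.
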